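(* Let $G=(V,E)$ be a control flow graph, let $p$ be a predicate node with successors $s_1,s_2$ in $G$ and with at least two successors in $A_p$. Assume $V_1\cap V_2=\emptyset$ and let $U=V_p\setminus(V_1\cup V_2)$. Then there exist nodes $a,b$ that are DOD on $p$ if and only if the cycle $C$ of $A_p$ has an unfolding belonging to the language $V_1.U^*.(V_2.U^* )^*.V_2.U^*.(V_1.U^* )^*$.
   Context: A control flow graph (CFG) is a finite directed graph $G=(V,E)$ in which every node has at most two outgoing edges; nodes with exactly two outgoing edges are predicate nodes. A path from $n_1$ is a nonempty finite or infinite sequence of nodes with each adjacent pair an edge; it is maximal if it is infinite or its last node has no successor. $V_p$ is the set of nodes occurring on all maximal paths from $p$ in $G$. For $V'\subseteq V$, a $V'$-interval from $x$ to $y$ is a finite path $n_1\ldots n_k$ in $G$ with $k\ge 2$, $n_1=x\in V'$, $n_k=y\in V'$, and $n_i\notin V'$ for $1<i<k$. $A_p$ is the directed graph with node set $V_p$ and an edge $(x,y)$ iff there is a $V_p$-interval from $x$ to $y$ in $G$. The cycle $C$ of $A_p$ is the subgraph of $A_p$ induced by $V_p\setminus\{p\}$; an unfolding of $C$ is a path in $C$ containing each node of $C$ exactly once, viewed as a word over the alphabet $V_p$. For $i\in\{1,2\}$, $V_i$ is the set of nodes $n\in V_p$ such that there is a finite path in $G$ from $s_i$ to $n$ whose nodes other than the last one all lie outside $V_p$ (possibly $n=s_i$). For three distinct nodes $p,a,b$ with $p$ a predicate node with successors $s_1,s_2$, the nodes $a,b$ are DOD on $p$ if all maximal paths from $p$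 contain both $a$ and $b$, all maximal paths from $s_1$ contain $a$ before any occurrence of $b$, and all maximal paths from $s_2$ contain $b$ before any occurrence of $a$. Concatenation and Kleene star of sets of nodes are the usual regular-language operations. *)

(* Defs.v *)
From mathcomp Require Import all_boot.
Set Implicit Arguments. Unset Strict Implicit. Unset Printing Implicit Defensive.

Section CFG.
Variables (V : finType) (E : rel V).

Definition is_cfg : Prop := forall x : V, #|[pred y | E x y]| <= 2.

Definition pred_node (p s1 s2 : V) : Prop :=
  s1 != s2 /\ forall y, E p y = (y == s1) || (y == s2).

Definition fin_maxpath (x : V) (s : seq V) : Prop :=
  path E x s /\ forall y, ~~ E (last x s) y.

Definition inf_path (x : V) (f : nat -> V) : Prop :=
  f 0 = x /\ forall i, E (f i) (f i.+1).

Definition on_all_maxpaths (x n : V) : Prop :=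
  (forall s, fin_maxpath x s -> n \in x :: s) /\
  (forall f, inf_path x f -> exists i, f i = n).

Definition Vp (p : V) (n : V) : Prop := on_all_maxpaths p n.

Definition interval (S : V -> Prop) (x y : V) : Prop :=
  S x /\ S y /\ exists m : seq V, path E x (rcons m y) /\ forall z, z \in m -> ~ S z.

Definition Aedge (p x y : V) : Prop := Vp p x /\ Vp p y /\ interval (Vp p) x y.

Fixpoint chainP (R : V -> V -> Prop) (x : V) (s : seq V) : Prop :=
  match s with
  | [::] => True
  | y :: s' => R x y /\ chainP R y s'
  end.

Definition Cnode (p n : V) : Prop := Vp p n /\ n <> p.

Definition unfolding (p : V) (w : seq V) : Prop :=
  (exists x r, w = x :: r /\ chainP (Aedge p) x r) /\
  uniq w /\
  (forall z, z \in w -> Cnode p z) /\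
  (forall z, Cnode p z -> z \in w).

Definition Vi (p s n : V) : Prop :=
  Vp p n /\ exists m : seq V, path E s m /\ last s m = n /\
     forall z, z \in belast s m -> ~ Vp p z.

Definition Uset (p s1 s2 n : V) : Prop := Vp p n /\ ~ Vi p s1 n /\ ~ Vi p s2 n.

Definition fin_before (x : V) (s : seq V) (a b : V) : Prop :=
  exists i, i < size (x :: s) /\ nth x (x :: s) i = a /\
    forall j, j <= i -> nth x (x :: s) j <> b.

Definition inf_before (f : nat -> V) (a b : V) : Prop :=
  exists i, f i = a /\ forall j, j <= i -> f j <> b.

Definition all_before (x a b : V) : Prop :=
  (forall s, fin_maxpath x s -> fin_before x s a b) /\
  (forall f, inf_path x f -> inf_before f a b).

Definition DOD (p s1 s2 a b : V) : Prop :=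
  p <> a /\ p <> b /\ a <> b /\
  on_all_maxpaths p a /\ on_all_maxpaths p b /\
  all_before s1 a b /\ all_before s2 b a.

End CFG.

Definition lang (T : Type) := seq T -> Prop.

Definition lsym (T : Type) (S : T -> Prop) : lang T :=
  fun w => exists x, w = [:: x] /\ S x.

Definition lcat (T : Type) (L1 L2 : lang T) : lang T :=
  fun w => exists w1 w2, w = w1 ++ w2 /\ L1 w1 /\ L2 w2.

Inductive lstar (T : Type) (L : lang T) : seq T -> Prop :=
  | lstar_nil : lstar L [::]
  | lstar_cons w1 w2 : L w1 -> lstar L w2 -> lstar L (w1 ++ w2).

Definition DODlang (V : finType) (E : rel V) (p s1 s2 : V) : lang V :=
  let V1 := lsym (Vi E p s1) in
  let V2 := lsym (Vi E p s2) in
  let Us := lstar (lsym (Uset E p s1 s2)) in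
  lcat V1 (lcat Us (lcat (lstar (lcat V2 Us))
     (lcat V2 (lcat Us (lstar (lcat V1 Us)))))).

(* Main.v *)
Require Import Defs.
From mathcomp Require Import all_boot.
From mathcomp Require Import zify.
From Stdlib Require Import ClassicalEpsilon Classical Lia.
Set Implicit Arguments. Unset Strict Implicit. Unset Printing Implicit Defensive.

Definition pb (P : Prop) : bool := if excluded_middle_informative P then true else false.
Lemma pbP (P : Prop) : reflect P (pb P).
Proof. rewrite /pb; case: excluded_middle_informative => h; by constructor. Qed.

Lemma mem_split (T : eqType) (z : T) (l : seq T) :
  z \in l -> exists l1 l2, l = l1 ++ z :: l2.
Proof. by case/splitPr=> l1 l2; exists l1, l2. Qed.

Lemma last_occ (T : eqType) (a : pred T) (l : seq T) : has a l ->
  exists l1 z l2, l = l1 ++ z :: l2 /\ a z /\ ~~ has a l2.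
Proof.
elim: l => [|x l IH] //= /orP [ax|hl].
- case hl: (has a l).
  + have [l1 [z [l2 [-> [az nh]]]]] := IH hl. by exists (x :: l1), z, l2.
  + by exists [::], x, l; rewrite hl.
- have [l1 [z [l2 [-> [az nh]]]]] := IH hl. by exists (x :: l1), z, l2.
Qed.

Lemma path_suffix (T : eqType) (r : rel T) x s l1 z l2 : path r x s ->
  x :: s = l1 ++ z :: l2 -> path r z l2 /\ last z l2 = last x s.
Proof.
move=> hp; case: l1 => [|y l1] /=.
- by case=> ex es; subst.
- case=> ex es; subst; move: hp; rewrite cat_path last_cat => /andP [_ /= /andP [_ h]]; by [].
Qed.

Lemma path_prefix (T : eqType) (r : rel T) x s l1 z l2 : path r x s ->
  x :: s = l1 ++ z :: l2 -> exists q, path r x q /\ last x q = z /\ x :: q = rcons l1 z.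
Proof.
move=> hp; case: l1 => [|y l1] /=.
- by case=> ex es; subst; exists [::].
- case=> ex es; subst; move: hp; rewrite cat_path => /andP [h1 /= /andP [h2 _]].
  exists (rcons l1 z); split; last split => //.
  + by rewrite rcons_path h1 h2.
  + by rewrite last_rcons.
Qed.

Section Gen.
Variables (V : finType) (E : rel V).

Definition mavoid (B : V -> Prop) (x : V) : Prop :=
  (exists s, fin_maxpath E x s /\ forall z, z \in x :: s -> ~ B z) \/
  (exists f, inf_path E x f /\ forall i, ~ B (f i)).

Lemma notall_avoid x n : ~ on_all_maxpaths E x n -> mavoid (eq n) x.
Proof.
move=> h. apply: NNPP => hn; apply: h; split.
- move=> s hs; apply: NNPP => hns; apply: hn; left; exists s; split=> // z hz hnz.
  by apply: hns; rewrite hnz.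
- move=> f hf; apply: NNPP => hnf; apply: hn; right; exists f; split=> // i hi.
  by apply: hnf; exists i.
Qed.

Lemma all_avoid x n (B : V -> Prop) :
  on_all_maxpaths E x n -> B n -> mavoid B x -> False.
Proof.
case=> hf hi hb [[s [hs hz]]|[f [hf' hz]]].
- exact: (hz n (hf s hs)).
- have [i hi'] := hi f hf'. by apply: (hz i); rewrite hi'.
Qed.

Lemma mavoid_mono (B B' : V -> Prop) x :
  (forall z, B' z -> B z) -> mavoid B x -> mavoid B' x.
Proof.
move=> hBB [[s [hs hz]]|[f [hf hz]]]; [left; exists s|right; exists f]; split=> //.
- by move=> z /hz h /hBB.
- by move=> i /hBB; apply: hz.
Qed.

Definition pre (s : V) (q : seq V) (f : nat -> V) (i : nat) : V :=
  if i < size q then nth s (s :: q) i else f (i - size q).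

Lemma pre_nth s q f i : f 0 = last s q -> i <= size q -> pre s q f i = nth s (s :: q) i.
Proof.
move=> f0 hi; rewrite /pre; case: ltnP => // h.
have -> : i = size q by apply/eqP; rewrite eqn_leq hi h.
by rewrite subnn f0 (last_nth s).
Qed.

Lemma inf_path_pre s q f : path E s q -> inf_path E (last s q) f -> inf_path E s (pre s q f).
Proof.
move=> hq [f0 hf]; split.
- rewrite pre_nth //.
- move=> i; rewrite /pre; case: (ltnP i (size q)) => hi.
  + have -> : (if i.+1 < size q then nth s (s :: q) i.+1 else f (i.+1 - size q))
              = nth s q i.
      case: ltnP => h2 //.
      have ei : i.+1 = size q by apply/eqP; rewrite eqn_leq hi h2.
      by rewrite ei subnn f0 (last_nth s) -ei.
    by move/(pathP s): hq; apply.
  + rewrite ltnNge (leqW hi) /= subSn //; exact: hf.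
Qed.

Lemma mavoid_prepend (B : V -> Prop) u t : path E u t ->
  (forall z, z \in u :: t -> ~ B z) -> mavoid B (last u t) -> mavoid B u.
Proof.
move=> ht hut [[s [[hs hl] hz]]|[f [hf hz]]].
- left; exists (t ++ s); split; first split.
  + by rewrite cat_path ht hs.
  + by rewrite last_cat.
  + move=> z; rewrite -cat_cons mem_cat => /orP [/hut //|hzt].
    apply: hz; by rewrite inE hzt orbT.
- right; exists (pre u t f); split; first exact: inf_path_pre.
  move=> i; rewrite /pre; case: ltnP => hi //.
  apply: hut; apply: mem_nth => /=; exact: leqW.
Qed.

Lemma mavoid_cycle (B : V -> Prop) x c : path E x c -> last x c = x -> c != [::] ->
  (forall z, z \in c -> ~ B z) -> mavoid B x.
Proof.
move=> hc hl hne hB.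
have hsz : 0 < size c by case: c hc hl hne hB.
pose nx j := if j.+1 < size c then j.+1 else 0.
pose ptr i := iter i nx 0.
have hptr : forall i, ptr i < size c.
  elim=> [|i IH] //=; rewrite /nx; case: ifP => //.
have hxc : x \in c.
  case: c hc hl hne hB {hsz ptr hptr nx} => [|y c] //= _ <- _ _; exact: mem_last.
right; exists (fun i => nth x (x :: c) (ptr i)); split; first split => //.
- move=> i /=; set j := ptr i.
  have hj : j < size c := hptr i.
  have -> : nth x (x :: c) (nx j) = nth x c j.
    rewrite /nx; case: ltnP => h //.
    have ej : j.+1 = size c by apply/eqP; rewrite eqn_leq hj h.
    by rewrite /= -[X in X = _]hl (last_nth x) -ej.
  by move/(pathP x): hc; apply.
- move=> i; apply: hB; move: (hptr i); case: (ptr i) => [|j] //= hj.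
  exact: mem_nth (ltnW hj).
Qed.

Lemma path_iota (f : nat -> V) j n :
  (forall k, j <= k -> k < j + n -> E (f k) (f k.+1)) -> path E (f j) (map f (iota j.+1 n)).
Proof.
elim: n j => [|n IH] j h //=.
rewrite h /=; last by lia.
- by apply: IH => k hk hk2; apply: h; lia.
- by [].
Qed.

Lemma last_iota (f : nat -> V) j n : last (f j) (map f (iota j.+1 n)) = f (j + n).
Proof. by elim: n j => [|n IH] j /=; rewrite ?addn0 // IH addSnnS. Qed.

Lemma mem_iota_map (f : nat -> V) n z : z \in f 0 :: map f (iota 1 n) -> exists k, k <= n /\ z = f k.
Proof.
rewrite inE => /orP [/eqP ->|/mapP [k]]; first by exists 0.
rewrite mem_iota => /andP [h1 h2] ->; exists k; split=> //; lia.
Qed.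

Lemma ex_maxpath z : mavoid (fun _ => False) z.
Proof.
pose nx v := odflt v [pick y | E v y].
pose f i := iter i nx z.
have hstep : forall i, [exists y, E (f i) y] -> E (f i) (f i.+1).
  move=> i /existsP [y hy]; rewrite /= /nx; case: pickP => [y' hy'|h] //=.
  by rewrite h in hy.
case: (classic (exists i, ~~ [exists y, E (f i) y])) => [ex|nex].
- case: (ex_minnP ex) => m hm hmin.
  left; exists (map f (iota 1 m)); split; last by move=> ? ? [].
  split.
  + apply: (path_iota (j := 0)) => k _ hk; apply: hstep.
    case: (boolP [exists y, E (f k) y]) => // hn.
    have := hmin k hn; by rewrite leqNgt hk.
  + move=> y; rewrite (last_iota f 0 m) add0n.
    by move: hm; move/existsPn; apply.
- right; exists f; split; last by move=> ? [].
  split => // i; apply: hstep.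
  case: (boolP [exists y, E (f i) y]) => // hn.
  exfalso; apply: nex; by exists i.
Qed.

Lemma all_path x n : on_all_maxpaths E x n -> exists q, path E x q /\ last x q = n.
Proof.
move=> [hf hi]; case: (ex_maxpath x) => [[s [hs _]]|[f [hf' _]]].
- have /mem_split [l1 [l2 e]] := hf s hs.
  have [q [hq [hl _]]] := path_prefix hs.1 e. by exists q.
- have [i hfi] := hi f hf'.
  exists (map f (iota 1 i)); rewrite -hf'.1; split.
  + apply: (path_iota (j := 0)) => k _ _; exact: hf'.2.
  + by rewrite last_iota.
Qed.

Lemma all_succ x n y : on_all_maxpaths E x n -> x <> n -> E x y -> on_all_maxpaths E y n.
Proof.
move=> hx hxn hxy; apply: NNPP => h.
case: (classic (y = n)) => [e|hyn].
- subst y; apply: h; split; [move=> s _; exact: mem_head|move=> f [f0 _]; by exists 0].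
- have ha := notall_avoid h.
  apply: (all_avoid hx (erefl n)); apply: (mavoid_prepend (t := [:: y])) => //=.
  + by rewrite hxy.
  + move=> z; rewrite !inE => /orP [/eqP ->|/eqP ->] e; [exact: hxn|exact: hyn].
Qed.

Lemma mavoid_split (B Q : V -> Prop) x : mavoid B x ->
  mavoid (fun z => B z \/ Q z) x \/ exists z, Q z /\ mavoid B z.
Proof.
move=> [[s [hs hz]]|[f [hf hz]]].
- case: (classic (exists z, z \in x :: s /\ Q z)) => [[z [hzs hq]]|hn].
  + right; exists z; split => //; left.
    have [l1 [l2 e]] := mem_split hzs.
    have [h1 h2] := path_suffix hs.1 e.
    exists l2; split; first split => //.
    * by rewrite h2; exact: hs.2.
    * move=> y hy; apply: hz; by rewrite e mem_cat hy orbT.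
  + left; left; exists s; split => // z hzs [|hq]; first exact: hz.
    apply: hn; by exists z.
- case: (classic (exists i, Q (f i))) => [[i hq]|hn].
  + right; exists (f i); split => //; right; exists (fun k => f (i + k)); split.
    * split; first by rewrite addn0.
      move=> k; rewrite addnS; exact: hf.2.
    * move=> k; exact: hz.
  + left; right; exists f; split => // i [|hq]; first exact: hz.
    apply: hn; by exists i.
Qed.

Lemma no_avoid_cycle x n c : on_all_maxpaths E x n -> path E x c -> last x c = x ->
  c != [::] -> (forall z, z \in c -> z <> n) -> False.
Proof.
move=> ha hc hl hne hz; apply: (all_avoid ha (erefl n)).
apply: (mavoid_cycle hc hl hne) => z /hz h e; exact: h.
Qed.

End Gen.

Lemma first_occ (T : eqType) (z : T) (l : seq T) :
  z \in l -> exists l1 l2, l = l1 ++ z :: l2 /\ z \notin l1.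
Proof.
elim: l => [|x l IH] //; rewrite inE; case: (eqVneq z x) => [-> _|hne /= hz].
- by exists [::], l.
- have [l1 [l2 [-> h]]] := IH hz. exists (x :: l1), l2; split => //.
  by rewrite inE negb_or hne h.
Qed.

Lemma chainP_cat (T : finType) (R : T -> T -> Prop) x r1 r2 :
  chainP R x (r1 ++ r2) -> chainP R x r1 /\ chainP R (last x r1) r2.
Proof.
elim: r1 x => [|y r1 IH] x /=; first by [].
move=> [h1 h2]; have [h3 h4] := IH _ h2; by [].
Qed.

Lemma cycle_suffix (T : eqType) (r : rel T) s l1 z l2 : cycle r s ->
  s = l1 ++ z :: l2 -> path r z l2.
Proof.
case: s => [|x s]; first by case: l1.
move=> hc e; rewrite /= rcons_path in hc; case/andP: hc => hc _.
exact: (path_suffix hc e).1.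
Qed.

Lemma last_mid (T : Type) (x y : T) s1 s2 : last x (s1 ++ y :: s2) = last y s2.
Proof. by rewrite last_cat. Qed.

Lemma star_mem (V : finType) (Q : V -> Prop) t : lstar (lsym Q) t -> forall z, z \in t -> Q z.
Proof.
elim => [|w1 w2 [x [-> hx]] _ IH] z //=; rewrite inE => /orP [/eqP -> //|]; exact: IH.
Qed.

Lemma star2_mem (V : finType) (P Q : V -> Prop) t :
  lstar (lcat (lsym P) (lstar (lsym Q))) t -> forall z, z \in t -> P z \/ Q z.
Proof.
elim => [|w1 w2 [u1 [u2 [-> [[x [-> hx]] hu2]]]] _ IH] z //=.
rewrite inE mem_cat => /orP [/eqP -> |/orP [hz|hz]]; [by left| |exact: IH].
right; exact: (star_mem hu2).
Qed.

Lemma star_all (V : finType) (Q : V -> Prop) t : (forall z, z \in t -> Q z) -> lstar (lsym Q) t.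
Proof.
elim: t => [|x t IH] h; first exact: lstar_nil.
have -> : x :: t = [:: x] ++ t by [].
apply: lstar_cons; first by exists x; split => //; apply: h; rewrite mem_head.
apply: IH => z hz; apply: h; by rewrite inE hz orbT.
Qed.

Lemma star_split (V : finType) (P Q : V -> Prop) t : (forall z, z \in t -> P z \/ Q z) ->
  exists t0 t1, t = t0 ++ t1 /\ lstar (lsym Q) t0 /\ lstar (lcat (lsym P) (lstar (lsym Q))) t1.
Proof.
elim: t => [|x t IH] h.
- exists [::], [::]; split => //; split; exact: lstar_nil.
- have [t0 [t1 [-> [h0 h1]]]] : exists t0 t1, t = t0 ++ t1 /\ lstar (lsym Q) t0 /\
      lstar (lcat (lsym P) (lstar (lsym Q))) t1.
    apply: IH => z hz; apply: h; by rewrite inE hz orbT.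
  case: (h x (mem_head x _)) => hx.
  + exists [::], (x :: t0 ++ t1); split => //; split; first exact: lstar_nil.
    have -> : x :: t0 ++ t1 = (x :: t0) ++ t1 by [].
    apply: lstar_cons => //. exists [:: x], t0; split => //; split => //; by exists x.
  + exists (x :: t0), t1; split => //; split => //.
    have -> : x :: t0 = [:: x] ++ t0 by [].
    apply: lstar_cons => //; by exists x.
Qed.

Section Main.
Variables (V : finType) (E : rel V) (p s1 s2 y1 y2 : V).
Hypothesis hpred : pred_node E p s1 s2.
Hypothesis hy12 : y1 <> y2.
Hypothesis hy1 : Aedge E p p y1.
Hypothesis hy2 : Aedge E p p y2.
Hypothesis hdisj : forall n : V, Vi E p s1 n -> Vi E p s2 n -> False.

Local Notation W := (Vp E p).
Local Notation OA := (on_all_maxpaths E).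

Lemma Es1 : E p s1. Proof. by case: hpred => _ h; rewrite h eqxx. Qed.
Lemma Es2 : E p s2. Proof. by case: hpred => _ h; rewrite h eqxx orbT. Qed.

Lemma OA_refl x : OA x x.
Proof. split; [move=> s _; exact: mem_head|move=> f [f0 _]; by exists 0]. Qed.

Lemma Aedge_p_ne y y' : Aedge E p p y -> Aedge E p p y' -> y <> y' -> y <> p.
Proof.
move=> [_ [_ [_ [_ [m [hm hmW]]]]]] [_ [hy' _]] hne e; subst y.
apply: (no_avoid_cycle (x:=p) (n:=y') hy' hm).
- by rewrite last_rcons.
- by rewrite -size_eq0 size_rcons.
- move=> z; rewrite mem_rcons inE => /orP [/eqP -> | hz] e.
  + by apply: hne.
  + subst z; exact: (hmW y' hz hy').
Qed.

Lemma Cy1 : Cnode E p y1.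
Proof. split; [exact: hy1.2.1 | exact: Aedge_p_ne hy1 hy2 hy12]. Qed.
Lemma Cy2 : Cnode E p y2.
Proof. split; [exact: hy2.2.1 | apply: Aedge_p_ne hy2 hy1 _; exact: nesym]. Qed.

Lemma succ_all y n : Aedge E p p y -> Cnode E p n -> OA y n.
Proof.
move=> [_ [_ [_ [_ [m [hm hmW]]]]]] [hn hnp].
apply: NNPP => h.
case: (classic (y = n)) => [e|hyn]; first by subst; apply: h; exact: OA_refl.
have ha := notall_avoid h.
apply: (all_avoid hn (erefl n)); apply: (mavoid_prepend hm).
- move=> z; rewrite -rcons_cons mem_rcons !inE => /orP [/eqP -> | /orP [/eqP -> | hz]] e.
  + exact: hyn (esym e).
  + exact: hnp e.
  + subst z; exact: (hmW n hz hn).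
- by rewrite last_rcons.
Qed.

Lemma allC x n : Cnode E p x -> Cnode E p n -> OA x n.
Proof.
move=> hx hn; apply: NNPP => h.
have ha := notall_avoid h.
case: (mavoid_split (fun z => z = y1 \/ z = y2) ha) => [ha' | [z [hz hz']]]; last first.
  case: hz => e; subst z.
  - exact: (all_avoid (succ_all hy1 hn) (erefl n) hz').
  - exact: (all_avoid (succ_all hy2 hn) (erefl n) hz').
have [t [ht htl]] := all_path (succ_all hy1 hx).
have hhas : has (fun z => (z == y1) || (z == y2)) (y1 :: t) by rewrite /= eqxx.
have [l1 [g [l2 [e [hg hl2]]]]] := last_occ hhas.
have [hp2 hl2l] := path_suffix ht e.
have key : forall g0 g', Aedge E p p g0 -> Cnode E p g' -> g0 <> g' -> (g' = y1 \/ g' = y2) ->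
   path E g0 l2 -> last g0 l2 = x -> False.
  move=> g0 g' hg0 hg' hne hg'y hp hl.
  apply: (all_avoid (succ_all hg0 hg') (erefl g')).
  apply: (mavoid_prepend hp).
  - move=> z; rewrite inE => /orP [/eqP -> | hz] e'.
    + exact: hne (esym e').
    + subst z. move/hasPn: hl2 => /(_ g' hz). by case: hg'y => ->; rewrite eqxx ?orbT.
  - rewrite hl; apply: mavoid_mono ha' => z <-; right; exact: hg'y.
case/orP: hg => /eqP eg; subst g.
- apply: (key y1 y2 hy1 Cy2 hy12 (or_intror erefl) hp2); by rewrite hl2l.
- apply: (key y2 y1 hy2 Cy1 (nesym hy12) (or_introl erefl) hp2); by rewrite hl2l.
Qed.

Lemma no_cycle_p c : path E p c -> last p c = p -> c != [::] -> False.
Proof.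
move=> hc hl hne.
have hy1c : y1 \in c.
  apply: NNPP => hn; apply: (no_avoid_cycle (n:=y1) hy1.2.1 hc hl hne) => z hz e.
  by apply: hn; rewrite -e.
have hhas : has (fun z => (z == y1) || (z == y2)) c by apply/hasP; exists y1; rewrite ?eqxx.
have [l1 [g [l2 [e [hg hl2]]]]] := last_occ hhas.
have e' : p :: c = (p :: l1) ++ g :: l2 by rewrite e.
have [hp2 hl2l] := path_suffix hc e'.
have key : forall g0 g', Aedge E p p g0 -> Cnode E p g' -> g0 <> g' -> (g' = y1 \/ g' = y2) ->
   path E g0 l2 -> last g0 l2 = p -> False.
  move=> g0 g' hg0 hg' hne' hg'y hp hl'.
  have [_ [_ [_ [_ [m [hm hmW]]]]]] := hg0.
  apply: (no_avoid_cycle (n:=g') (succ_all hg0 hg') (c := l2 ++ rcons m g0)).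
  - by rewrite cat_path hp hl' hm.
  - by rewrite last_cat hl' last_rcons.
  - by rewrite -size_eq0 size_cat size_rcons addnS.
  - move=> z; rewrite mem_cat mem_rcons inE => /orP [hz | /orP [/eqP -> | hz]] ez.
    + subst z. move/hasPn: hl2 => /(_ g' hz). by case: hg'y => ->; rewrite eqxx ?orbT.
    + exact: hne' ez.
    + subst z; exact: (hmW _ hz hg'.1).
case/orP: hg => /eqP eg; subst g.
- apply: (key y1 y2 hy1 Cy2 hy12 (or_intror erefl) hp2); by rewrite hl2l.
- apply: (key y2 y1 hy2 Cy1 (nesym hy12) (or_introl erefl) hp2); by rewrite hl2l.
Qed.

Lemma Vi_not_p s : E p s -> Vi E p s p -> False.
Proof.
move=> hs [_ [m [hm [hl _]]]].
apply: (no_cycle_p (c := s :: m)) => //=; by rewrite hs hm.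
Qed.

Lemma no_edge_to_p x : Cnode E p x -> Aedge E p x p -> False.
Proof.
move=> [hx hxp] [_ [_ [_ [_ [m [hm _]]]]]].
have [t [ht htl]] := all_path hx.
apply: (no_cycle_p (c := t ++ rcons m p)).
- by rewrite cat_path ht htl hm.
- by rewrite last_cat last_rcons.
- by rewrite -size_eq0 size_cat size_rcons addnS.
Qed.

Lemma firstW s q : path E s q -> W (last s q) ->
  exists q1 q2, q = q1 ++ q2 /\ Vi E p s (last s q1).
Proof.
elim: q s => [|v q IH] s /=.
- move=> _ hs; exists [::], [::]; split; first by [].
  split; first exact: hs.
  exists [::]; split; first by [].
  split; first by []. move=> z; by rewrite in_nil.
- move=> /andP [hsv hq] hl.
  case: (classic (W s)) => hWs.
  + exists [::], (v :: q); split; first by [].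
    split; first exact: hWs.
    exists [::]; split; first by [].
    split; first by []. move=> z; by rewrite in_nil.
  + have [q1 [q2 [-> [hW [m [hm [hml hmb]]]]]]] := IH v hq hl.
    exists (v :: q1), q2; split => //=; split => //.
    exists (v :: m); split; first by rewrite /= hsv hm.
    split => //= z; rewrite inE => /orP [/eqP -> //|]; exact: hmb.
Qed.

Lemma Vi_interval x s e : W x -> E x s -> Vi E p s e -> Aedge E p x e.
Proof.
move=> hx hxs [he [m [hm [hml hmb]]]].
split => //; split => //; split => //; split => //.
exists (belast s m); split; last exact: hmb.
by rewrite -hml -lastI /= hxs hm.
Qed.

Lemma expand x r : chainP (Aedge E p) x r -> exists q, path E x q /\ last x q = last x r /\
  (r != [::] -> q != [::]) /\ (forall z, z \in q -> W z -> z \in r).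
Proof.
elim: r x => [|y r IH] x /=.
- by move=> _; exists [::].
- move=> [[_ [_ [_ [_ [m [hm hmW]]]]]] hc].
  have [q [hq [hql [_ hqW]]]] := IH y hc.
  exists (rcons m y ++ q); split; last split; last split.
  + by rewrite cat_path hm last_rcons hq.
  + by rewrite last_cat last_rcons hql.
  + by rewrite -size_eq0 size_cat size_rcons.
  + move=> z; rewrite mem_cat mem_rcons inE => /orP [/orP [/eqP -> | hz] | hz] hWz.
    * by rewrite inE eqxx.
    * by case: (hmW z hz hWz).
    * by rewrite inE (hqW z hz hWz) orbT.
Qed.

Definition ae x y := pb (Aedge E p x y).

Lemma chainP_path x r : chainP (Aedge E p) x r <-> path ae x r.
Proof.
elim: r x => [|y r IH] x //=; split.
- move=> [h1 h2]; apply/andP; split; [exact/pbP | exact/IH].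
- move=> /andP [h1 h2]; split; [exact/pbP | exact/IH].
Qed.



Lemma AB s a b : OA s b -> a <> b ->
  (forall q, path E s q -> last s q = b -> (forall z, z \in s :: q -> z <> a) -> False) ->
  all_before E s a b.
Proof.
move=> [hfb hib] hab hfin; split.
- move=> s' hs'.
  have [l1 [l2 [e hbl1]]] := first_occ (hfb s' hs').
  case: (boolP (a \in l1)) => ha.
  + exists (index a l1); rewrite e; split; last split.
    * rewrite size_cat /=; apply: (leq_trans (n := size l1)); first by rewrite index_mem.
      by rewrite leq_addr.
    * by rewrite nth_cat index_mem ha nth_index.
    * move=> j hj; rewrite nth_cat.
      have hjl : j < size l1 by apply: (leq_ltn_trans hj); rewrite index_mem.
      rewrite hjl => ej; move: hbl1; by rewrite -ej mem_nth.
  + exfalso.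
    have [q [hq [hql eqq]]] := path_prefix hs'.1 e.
    apply: (hfin q hq hql) => z; rewrite eqq mem_rcons inE => /orP [/eqP -> |hz] ez; first exact: hab (esym ez).
    by subst z; rewrite hz in ha.
- move=> f hf. have [i0 hi0] := hib f hf.
  have ex : exists i, f i == b by exists i0; rewrite hi0.
  case: (ex_minnP ex) => j /eqP hj hmin.
  case: (classic (exists i, i < j /\ f i = a)) => [[i [hij hia]] | hn].
  + exists i; split => // k hk e.
    have := hmin k; rewrite e eqxx => /(_ erefl) hjk.
    have : j < j by apply: (leq_ltn_trans hjk); exact: (leq_ltn_trans hk).
    by rewrite ltnn.
  + exfalso; apply: (hfin (map f (iota 1 j))).
    * rewrite -hf.1; apply: (path_iota (j:=0)) => k _ _; exact: hf.2.
    * by rewrite -hf.1 last_iota.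
    * move=> z; rewrite -hf.1 => /mem_iota_map [k [hk ->]] ez.
      case: (ltnP k j) => hkj; first by apply: hn; exists k.
      have ek : k = j by apply/eqP; rewrite eqn_leq hk hkj.
      subst k; apply: hab; by rewrite -ez hj.
Qed.

Lemma ABinv s a b : all_before E s a b ->
  forall q, path E s q -> last s q = b -> (forall z, z \in s :: q -> z <> a) -> False.
Proof.
move=> [hf hi] q hq hql hqa.
case: (ex_maxpath E b) => [[r [[hr hrl] _]] | [f [hfp _]]].
- have hmax : fin_maxpath E s (q ++ r).
    split; first by rewrite cat_path hq hql hr.
    by rewrite last_cat hql.
  have [i [hi1 [hi2 hi3]]] := hf _ hmax.
  case: (leqP i (size q)) => hiq.
  + apply: (hqa (nth s (s :: q) i)); first by rewrite mem_nth.
    by rewrite -hi2 -cat_cons nth_cat /= ltnS hiq.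
  + apply: (hi3 (size q) (ltnW hiq)).
    by rewrite -cat_cons nth_cat /= ltnSn -(last_nth s) hql.
- have hf0 : f 0 = last s q by rewrite hfp.1 hql.
  have hg := inf_path_pre hq (conj hf0 hfp.2).
  have [i [hi1 hi2]] := hi _ hg.
  case: (leqP i (size q)) => hiq.
  + apply: (hqa (nth s (s :: q) i)); first by rewrite mem_nth.
    by rewrite -hi1 pre_nth.
  + apply: (hi2 (size q) (ltnW hiq)).
    by rewrite pre_nth // -(last_nth s) hql.
Qed.

Lemma FinGen s a b : E p s -> Cnode E p a -> Cnode E p b ->
  (forall e, Vi E p s e -> Cnode E p e -> e <> a -> exists c, path E b c /\ last b c = e /\
     c != [::] /\ (forall z, z \in c -> z <> a)) ->
  forall q, path E s q -> last s q = b -> (forall z, z \in s :: q -> z <> a) -> False.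
Proof.
move=> hs ha hb hprov q hq hql hqa.
have hWl : W (last s q) by rewrite hql; exact: hb.1.
have [q1 [q2 [eqq hVi]]] := firstW hq hWl.
have hep : last s q1 <> p by move=> ep; apply: (Vi_not_p hs); move: hVi; by rewrite ep.
have hea : last s q1 <> a.
  apply: hqa; by rewrite eqq -cat_cons mem_cat mem_last.
have [c [hc [hcl [hcne hca]]]] := hprov _ hVi (conj hVi.1 hep) hea.
move: (hq); rewrite eqq cat_path => /andP [_ hq2].
apply: (no_avoid_cycle (n:=a) (allC hb ha) (c := c ++ q2)).
- by rewrite cat_path hc hcl.
- by rewrite last_cat hcl -last_cat -eqq hql.
- by move: hcne; case: c {hc hcl hca}.
- move=> z; rewrite mem_cat => /orP [/hca // | hz]. apply: hqa.
  by rewrite eqq inE mem_cat hz !orbT.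
Qed.

Lemma lang_dec w : DODlang E p s1 s2 w -> exists c0 X l2 Y, w = c0 :: X ++ l2 :: Y /\
  Vi E p s1 c0 /\ Vi E p s2 l2 /\ (forall z, z \in X -> ~ Vi E p s1 z) /\
  (forall z, z \in Y -> ~ Vi E p s2 z).
Proof.
rewrite /DODlang.
move=> [w1 [w2 [-> [[c0 [-> hc0]] [a1 [a2 [-> [ha1 [b1 [b2 [-> [hb1 [d1 [d2 [-> [[l2 [-> hl2]] [e1 [e2 [-> [he1 he2]]]]]]]]]]]]]]]]]]]].
exists c0, (a1 ++ b1), l2, (e1 ++ e2); split; first by rewrite /= -!catA.
split => //; split => //; split.
- move=> z; rewrite mem_cat => /orP [hz | hz].
  + by case: (star_mem ha1 hz) => _ [].
  + case: (star2_mem hb1 hz) => [h2 h1|[_ [h1 _]] //]; exact: hdisj h1 h2.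
- move=> z; rewrite mem_cat => /orP [hz | hz].
  + by case: (star_mem he1 hz) => _ [].
  + case: (star2_mem he2 hz) => [h1 h2|[_ [_ h2]] //]; exact: hdisj h1 h2.
Qed.

Lemma dir_back w : unfolding E p w -> DODlang E p s1 s2 w -> exists a b, DOD E p s1 s2 a b.
Proof.
move=> [[x [r [ew hch]]] [hu [hC hcov]]] hl.
have [c0 [X [l2 [Y [ew' [h0 [hl2 [hX hY]]]]]]]] := lang_dec hl.
have [ex er] : x = c0 /\ r = X ++ l2 :: Y by move: ew'; rewrite ew; case.
subst x r w.
have Cc0 : Cnode E p c0 by apply: hC; rewrite mem_head.
have Cl2 : Cnode E p l2 by apply: hC; rewrite inE mem_cat inE eqxx !orbT.
have hne : c0 <> l2 by move=> e; subst; exact: (hdisj h0 hl2).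
move: (hu); rewrite cons_uniq => /andP [hc0n hu2].
move: (hu2); rewrite cat_uniq /= => /and3P [_ /norP [hl2X _] _].
have [hchX hchr] := chainP_cat hch.
have [_ hchY] : Aedge E p (last c0 X) l2 /\ chainP (Aedge E p) l2 Y by exact: hchr.
exists c0, l2; split; [exact: nesym Cc0.2|split; [exact: nesym Cl2.2|split => //]].
split; first exact: Cc0.1. split; first exact: Cl2.1. split.
- apply: AB; [exact: (all_succ Cl2.1 (nesym Cl2.2) Es1) | exact: hne|].
  apply: (FinGen Es1 Cc0 Cl2) => e hVe hCe hea.
  have : e \in c0 :: X ++ l2 :: Y by exact: hcov.
  rewrite inE mem_cat inE => /orP [/eqP // | /orP [heX | /orP [/eqP hel2 | heY]]].
  + by case: (hX e heX).
  + by subst e; case: (hdisj hVe hl2).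
  + have [Y1 [Y2 eY]] := mem_split heY.
    move: hchY; rewrite eY -cat_rcons => /chainP_cat [hc1 _].
    have [q [hq [hql [hqne hqW]]]] := expand hc1.
    exists q; split => //; split; first by rewrite hql last_rcons.
    split; first by apply: hqne; rewrite -size_eq0 size_rcons.
    move=> z hz ez; subst z.
    have hm := hqW c0 hz Cc0.1; rewrite mem_rcons inE in hm.
    case/orP: hm => [/eqP ec | hm]; first exact: hea (esym ec).
    apply: (negP hc0n); by rewrite mem_cat inE eY mem_cat hm !orbT.
- apply: AB; [exact: (all_succ Cc0.1 (nesym Cc0.2) Es2) | exact: nesym hne|].
  apply: (FinGen Es2 Cl2 Cc0) => e hVe hCe hea.
  have : e \in c0 :: X ++ l2 :: Y by exact: hcov.
  rewrite inE mem_cat inE => /orP [/eqP hec0 | /orP [heX | /orP [/eqP // | heY]]].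
  + by subst e; case: (hdisj h0 hVe).
  + have [X1 [X2 eX]] := mem_split heX.
    move: hchX; rewrite eX -cat_rcons => /chainP_cat [hc1 _].
    have [q [hq [hql [hqne hqW]]]] := expand hc1.
    exists q; split => //; split; first by rewrite hql last_rcons.
    split; first by apply: hqne; rewrite -size_eq0 size_rcons.
    move=> z hz ez; subst z.
    have hm := hqW l2 hz Cl2.1; rewrite mem_rcons inE in hm.
    case/orP: hm => [/eqP ec | hm]; first exact: hea (esym ec).
    apply: (negP hl2X); by rewrite eX mem_cat inE hm.
  + by case: (hY e heY).
Qed.



Lemma succ_ex z : Cnode E p z -> exists y, Aedge E p z y /\ Cnode E p y.
Proof.
move=> hz.
have [n [hn hnz]] : exists n, Cnode E p n /\ n <> z.
  case: (classic (y1 = z)) => e.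
  - exists y2; split; first exact: Cy2.
    by move=> e'; apply: hy12; rewrite e e'.
  - by exists y1; split; first exact: Cy1.
have [q [hq hql]] := all_path (allC hz hn).
case: q hq hql => [|v q] /=; first by move=> _ e; exfalso; apply: hnz; rewrite e.
move=> /andP [hzv hq] hql.
have hWl : W (last v q) by rewrite hql; exact: hn.1.
have [q1 [q2 [_ hVi]]] := firstW hq hWl.
have hA := Vi_interval hz.1 hzv hVi.
exists (last v q1); split; first exact: hA.
split; first exact: hVi.1.
move=> e; apply: (no_edge_to_p hz); by rewrite e in hA.
Qed.

Definition hamgoal := exists w, w != [::] /\ uniq w /\ (forall z, z \in w -> Cnode E p z) /\
  (forall z, Cnode E p z -> z \in w) /\ cycle ae w.

Lemma ham_close x r y : path ae x r -> uniq (x :: r) -> (forall z, z \in x :: r -> Cnode E p z) ->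
  Aedge E p (last x r) y -> y \in x :: r -> hamgoal.
Proof.
move=> hp hu hC hA hy.
have [l1 [l2 e]] := mem_split hy.
have [hp2 hl2] := path_suffix hp e.
have hcov : forall n, Cnode E p n -> n \in y :: l2.
  move=> n hn; apply: NNPP => hnin.
  have hch : chainP (Aedge E p) y (rcons l2 y).
    apply/chainP_path; rewrite rcons_path hp2 hl2 /=; exact/pbP.
  have [q [hq [hql [hqne hqW]]]] := expand hch.
  apply: (no_avoid_cycle (n:=n) (allC (hC y hy) hn) hq).
  - by rewrite hql last_rcons.
  - by apply: hqne; rewrite -size_eq0 size_rcons.
  - move=> z hz ez; subst z; have := hqW n hz hn.1; rewrite mem_rcons => hm.
    by apply: hnin.
have hx : x \in y :: l2 by apply: hcov; apply: hC; exact: mem_head.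
case: l1 e => [|x' l1] e.
- case: e => ex er; subst y r.
  exists (x :: l2); split => //; split => //; split => //; split => //.
  by rewrite /= rcons_path hp2 hl2; apply/pbP.
- exfalso; case: e => ex er; subst x'.
  move: hu; rewrite er -cat_cons cat_uniq => /and3P [_ /hasPn h _].
  by move: (h x hx); rewrite mem_head.
Qed.

Lemma ham : hamgoal.
Proof.
suff H : forall k x r, #|V| - size (x :: r) <= k -> path ae x r -> uniq (x :: r) ->
   (forall z, z \in x :: r -> Cnode E p z) -> hamgoal.
  apply: (H #|V| y1 [::]) => //; first by rewrite leq_subr.
  move=> z; rewrite inE => /eqP ->; exact: Cy1.
elim=> [|k IH] x r hk hp hu hC.
- have hz : Cnode E p (last x r) by apply: hC; exact: mem_last.
  have [y [hA hy]] := succ_ex hz.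
  case: (boolP (y \in x :: r)) => hyin; first exact: ham_close hA hyin.
  exfalso.
  have hu' : uniq (x :: rcons r y) by rewrite -rcons_cons rcons_uniq hyin hu.
  have := max_card (mem (x :: rcons r y)).
  rewrite (card_uniqP hu') /= size_rcons => hs.
  move: hk; rewrite /=; lia.
- have hz : Cnode E p (last x r) by apply: hC; exact: mem_last.
  have [y [hA hy]] := succ_ex hz.
  case: (boolP (y \in x :: r)) => hyin; first exact: ham_close hA hyin.
  have hu' : uniq (x :: rcons r y) by rewrite -rcons_cons rcons_uniq hyin hu.
  have := max_card (mem (x :: rcons r y)).
  rewrite (card_uniqP hu') /= size_rcons => hs.
  apply: (IH x (rcons r y)) => //.
  + move: hk; rewrite /= size_rcons; lia.
  + rewrite rcons_path hp /=; exact/pbP.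
  + move=> z; rewrite -rcons_cons mem_rcons inE => /orP [/eqP -> //|]; exact: hC.
Qed.



Lemma Gpath s e l t : Vi E p s e -> path ae e l -> (forall z, z \in e :: l -> z <> t) -> W t ->
  exists q, path E s q /\ last s q = last e l /\ (forall z, z \in s :: q -> z <> t).
Proof.
move=> [he [m [hm [hml hmb]]]] hl ht hWt.
have [q' [hq' [hql' [_ hqW]]]] := expand (proj2 (chainP_path e l) hl).
exists (m ++ q'); split; first by rewrite cat_path hm hml hq'.
split; first by rewrite last_cat hml hql'.
move=> z; rewrite -cat_cons mem_cat => /orP [hz | hz] ez; subst z.
- move: hz; rewrite lastI mem_rcons inE hml => /orP [/eqP ee | hb].
  + by apply: (ht e (mem_head _ _)); rewrite ee.
  + exact: (hmb t hb hWt).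
- have := hqW t hz hWt => htl. apply: (ht t) => //; by rewrite inE htl orbT.
Qed.

Lemma Vi_nonempty s n : E p s -> Cnode E p n -> exists e, Vi E p s e /\ Cnode E p e.
Proof.
move=> hs hn.
have [q [hq hql]] := all_path (all_succ hn.1 (nesym hn.2) hs).
have hWl : W (last s q) by rewrite hql; exact: hn.1.
have [q1 [q2 [_ hVi]]] := firstW hq hWl.
exists (last s q1); split => //; split; first exact: hVi.1.
move=> e; apply: (Vi_not_p hs); by rewrite e in hVi.
Qed.

Lemma lang_intro g A B C : Vi E p s1 g -> (forall z, z \in A -> Uset E p s1 s2 z) ->
  (forall z, z \in B -> Vi E p s2 z \/ Uset E p s1 s2 z) -> (exists y, y \in B /\ Vi E p s2 y) ->
  (forall z, z \in C -> Vi E p s1 z \/ Uset E p s1 s2 z) -> DODlang E p s1 s2 (g :: A ++ B ++ C).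
Proof.
move=> hg hA hB [y0 [hy0 hy0']] hC.
have hhas : has (fun z => pb (Vi E p s2 z)) B by apply/hasP; exists y0 => //; exact/pbP.
have [Bl [y [Br [eB [hy hBr]]]]] := last_occ hhas.
have hBl : forall z, z \in Bl -> Vi E p s2 z \/ Uset E p s1 s2 z.
  by move=> z hz; apply: hB; rewrite eB mem_cat hz.
have [B0 [B1 [eBl [hB0 hB1]]]] := star_split hBl.
have hBrU : forall z, z \in Br -> Uset E p s1 s2 z.
  move=> z hz; have : z \in B by rewrite eB mem_cat inE hz !orbT.
  move/hB => [h|//]; move/hasPn: hBr => /(_ z hz); by rewrite (introT (pbP _) h).
have [C0 [C1 [eC [hC0 hC1]]]] := star_split hC.
rewrite eB eBl eC /DODlang.
exists [:: g], ((A ++ B0) ++ (B1 ++ ([:: y] ++ ((Br ++ C0) ++ C1)))).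
split; first by rewrite /= -!catA /= -?catA.
split; first by exists g.
exists (A ++ B0), (B1 ++ ([:: y] ++ ((Br ++ C0) ++ C1))); split => //; split.
  apply: star_all => z; rewrite mem_cat => /orP [/hA // | hz]; exact: star_mem hB0 _ hz.
exists B1, ([:: y] ++ ((Br ++ C0) ++ C1)); split => //; split => //.
exists [:: y], ((Br ++ C0) ++ C1); split => //; split; first by exists y; split => //; exact/pbP.
exists (Br ++ C0), C1; split => //; split => //.
apply: star_all => z; rewrite mem_cat => /orP [/hBrU // | hz]; exact: star_mem hC0 _ hz.
Qed.

Lemma dir_fwd a b : DOD E p s1 s2 a b -> exists w, unfolding E p w /\ DODlang E p s1 s2 w.
Proof.
move=> [hpa [hpb [hab [hWa [hWb [hab1 hab2]]]]]].
have Ca : Cnode E p a := conj hWa (nesym hpa).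
have Cb : Cnode E p b := conj hWb (nesym hpb).
have [w [hwne [hu [hC [hcov hcyc]]]]] := ham.
have [w1 [w2 ew]] := mem_split (hcov b Cb).
have ha' : a \in w2 ++ w1.
  have : a \in w by exact: hcov.
  rewrite ew !mem_cat inE => /or3P [h|/eqP h|h]; [by rewrite h orbT | by case: hab | by rewrite h].
have [L0 [R0 e0]] := mem_split ha'.
set L := rcons L0 a. set R := rcons R0 b.
have ew' : rot (size (rcons w1 b)) w = L ++ R.
  rewrite ew -cat_rcons rot_size_cat -rcons_cat e0 /L /R cat_rcons rcons_cat //.
have hcyc' : cycle ae (L ++ R) by rewrite -ew' rot_cycle.
have hu' : uniq (L ++ R) by rewrite -ew' rot_uniq.
have hmem' : forall z, (z \in L ++ R) = (z \in w) by move=> z; rewrite -ew' mem_rot.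
have hdLR : forall z, z \in L -> z \in R -> False.
  move=> z hzL hzR; move: hu'; rewrite cat_uniq => /and3P [_ /hasPn h _].
  by move: (h z hzR); rewrite hzL.
have haL : a \in L by rewrite /L mem_rcons mem_head.
have hbR : b \in R by rewrite /R mem_rcons mem_head.
have hV1L : forall e, Vi E p s1 e -> Cnode E p e -> e \in L.
  move=> e hVe hCe; apply: NNPP => heL.
  have heR : e \in R.
    move: (hcov e hCe); rewrite -hmem' mem_cat => /orP [h|//]; by rewrite h in heL.
  have [R1 [R2 eR]] := mem_split heR.
  have hp : path ae e R2 by apply: (cycle_suffix hcyc' (l1 := L ++ R1)); rewrite eR catA.
  have hlast : last e R2 = b by rewrite -(last_mid b e R1 R2) -eR /R last_rcons.
  have hav : forall z, z \in e :: R2 -> z <> a.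
    move=> z hz ez; apply: (hdLR a haL); by rewrite -ez eR mem_cat hz orbT.
  have [q [hq [hql hqa]]] := Gpath hVe hp hav hWa.
  apply: (ABinv hab1 hq) => //; by rewrite hql.
have hV2R : forall e, Vi E p s2 e -> Cnode E p e -> e \in R.
  move=> e hVe hCe; apply: NNPP => heR.
  have heL : e \in L.
    move: (hcov e hCe); rewrite -hmem' mem_cat => /orP [//|h]; by rewrite h in heR.
  have [L1 [L2 eL]] := mem_split heL.
  have hp0 : path ae e (L2 ++ R) by apply: (cycle_suffix hcyc' (l1 := L1)); rewrite eL -catA.
  have hp : path ae e L2 by move: hp0; rewrite cat_path => /andP [].
  have hlast : last e L2 = a by rewrite -(last_mid a e L1 L2) -eL /L last_rcons.
  have hav : forall z, z \in e :: L2 -> z <> b.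
    move=> z hz ez; apply: (hdLR b _ hbR); by rewrite -ez eL mem_cat hz orbT.
  have [q [hq [hql hqa]]] := Gpath hVe hp hav hWb.
  apply: (ABinv hab2 hq) => //; by rewrite hql.
have [e1 [hV1 hC1]] := Vi_nonempty Es1 Ca.
have [e2 [hV2 hC2]] := Vi_nonempty Es2 Cb.
have hhas : has (fun z => pb (Vi E p s1 z)) L.
  by apply/hasP; exists e1; [exact: hV1L | exact/pbP].
have [L1 [g [L2 [eL [hg hL2]]]]] := last_occ hhas.
have hrot : rot (size L1) (L ++ R) = g :: L2 ++ R ++ L1.
  by rewrite eL -catA rot_size_cat /= -catA.
have hmemu : forall z, (z \in g :: L2 ++ R ++ L1) = (z \in w).
  by move=> z; rewrite -hrot mem_rot hmem'.
exists (g :: L2 ++ R ++ L1); split.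
- split.
  + exists g, (L2 ++ R ++ L1); split => //; apply/chainP_path.
    have := hcyc'; rewrite -(rot_cycle (size L1)) hrot /= rcons_path => /andP [] //.
  + split; first by rewrite -hrot rot_uniq.
    split; first by move=> z; rewrite hmemu; exact: hC.
    by move=> z hz; rewrite hmemu; exact: hcov.
- have hzL : forall z, z \in L2 -> z \in L by move=> z hz; rewrite eL mem_cat inE hz !orbT.
  have hzL1 : forall z, z \in L1 -> z \in L by move=> z hz; rewrite eL mem_cat hz.
  have hCu : forall z, z \in g :: L2 ++ R ++ L1 -> Cnode E p z by move=> z; rewrite hmemu; exact: hC.
  apply: lang_intro.
  + exact/pbP.
  + move=> z hz; have hCz : Cnode E p z by apply: hCu; rewrite inE mem_cat hz orbT.
    split; first exact: hCz.1. split.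
    * move=> h; move/hasPn: hL2 => /(_ z hz); by rewrite (introT (pbP _) h).
    * move=> h; exact: hdLR (hzL z hz) (hV2R z h hCz).
  + move=> z hz; have hCz : Cnode E p z by apply: hCu; rewrite inE !mem_cat hz !orbT.
    case: (classic (Vi E p s2 z)) => h; [by left | right].
    split; first exact: hCz.1. split => // h1.
    exact: hdLR (hV1L z h1 hCz) hz.
  + by exists e2; split => //; exact: hV2R.
  + move=> z hz; have hCz : Cnode E p z by apply: hCu; rewrite inE !mem_cat hz !orbT.
    case: (classic (Vi E p s1 z)) => h; [by left | right].
    split; first exact: hCz.1. split => // h2.
    exact: hdLR (hzL1 z hz) (hV2R z h2 hCz).
Qed.

End Main.


Theorem theorem4p14 (V : finType) (E : rel V) (p s1 s2 : V)
  (hcfg : is_cfg E)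
  (hpred : pred_node E p s1 s2)
  (hAp : exists y1 y2 : V, y1 <> y2 /\ Aedge E p p y1 /\ Aedge E p p y2)
  (hdisj : forall n : V, Vi E p s1 n -> Vi E p s2 n -> False) :
  (exists a b : V, DOD E p s1 s2 a b) <->
  (exists w : seq V, unfolding E p w /\ DODlang E p s1 s2 w).
Proof.
have [y1 [y2 [h12 [h1 h2]]]] := hAp.
split.
- move=> [a [b hd]]; exact: (dir_fwd hpred h12 h1 h2 hd).
- move=> [w [hu hl]]; exact: (dir_back hpred h12 h1 h2 hdisj hu hl).
Qed.
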